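(* For every Dale matrix $W\in\mathbb{D}_n$ satisfying the Ground Assumption, the code $\mathcal{C}(W)$ is intersection-complete (if $\sigma,\nu\in\mathcal{C}(W)$ then $\sigma\cap\nu\in\mathcal{C}(W)$), and consequently $\mathcal{C}(W)$ is an open convex code.
   Context: Threshold-linear network: $\dot x_i=-x_i+[\sum_j W_{ij}x_j+b_i]_+$ with $[y]_+=\max(0,y)$; a fixed point is $x^*$ with $x^*=[Wx^*+b]_+$. A Dale matrix $W\in\mathbb{D}_n$ is an $n\times n$ real matrix with a partition $[n]=\mathcal{E}\sqcup\mathcal{I}$ such that $W_{ii}=0$, $W_{ji}\ge0$ for all $j$ if $i\in\mathcal{E}$, $W_{ji}\le0$ for all $j$ if $i\in\mathcal{I}$. Ground Assumption: $(I-W)_\sigma$ nonsingular for every nonempty $\sigma\subset[n]$. Excitatory support: $\mathrm{supp}_+x=\{i\in\mathcal{E}:x_i>0\}$. Combinatorial code: $\mathcal{C}(W)=\{\mathrm{supp}_+x^*: b\in\mathbb{R}^n_{\ge0},\ x^*\in\mathbb{R}^n_{\ge0}\text{ a fixed point of }(W,b)\}\subset 2^\mathcal{E}$. For a collection $\mathcal{U}=\{U_i\}_{i\in\mathcal{E}}$ of subsets of $\mathbb{R}^d$, $\mathrm{code}(\mathcal{U})=\{\sigma\subset\mathcal{E}: (\bigcap_{i\in\sigma}U_i)\setminus\bigcup_{j\notin\sigma}U_j\neq\varnothing\}$ (with $\bigcap_{i\in\varnothing}U_i=\mathbb{R}^d$). A code $\mathcal{C}\subset 2^{\mathcal{E}}$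 is open convex if $\mathcal{C}=\mathrm{code}(\mathcal{U})$ for some collection $\mathcal{U}$ of open convex subsets of some $\mathbb{R}^d$, $d\ge1$. *)

(* Defs.v *)
From HB Require Import structures.
From mathcomp Require Import all_boot all_order all_algebra.
From mathcomp Require Import all_classical all_reals all_analysis.
Set Implicit Arguments. Unset Strict Implicit. Unset Printing Implicit Defensive.
Import Order.TTheory GRing.Theory Num.Theory.
Import numFieldNormedType.Exports.
Local Open Scope classical_set_scope.
Local Open Scope ring_scope.

Definition dale (R : realType) (n : nat) (W : 'M[R]_n) (E : {set 'I_n}) : Prop :=
  (forall i : 'I_n, W i i = 0) /\
  (forall i j : 'I_n, i \in E -> 0 <= W j i) /\
  (forall i j : 'I_n, i \notin E -> W j i <= 0).

Definition principal_submx (R : realType) (n : nat) (A : 'M[R]_n)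
    (sigma : {set 'I_n}) : 'M[R]_#|sigma| :=
  \matrix_(k < #|sigma|, l < #|sigma|)
     A (@enum_val _ (mem sigma) k) (@enum_val _ (mem sigma) l).

Definition ground_assumption (R : realType) (n : nat) (W : 'M[R]_n) : Prop :=
  forall sigma : {set 'I_n}, sigma != finset.set0 ->
    \det (principal_submx (1%:M - W) sigma) != 0.

Definition tln_fixed_point (R : realType) (n : nat) (W : 'M[R]_n)
    (b x : 'cV[R]_n) : Prop :=
  forall i : 'I_n, x i 0 = Num.max 0 ((W *m x) i 0 + b i 0).

Definition supp_plus (R : realType) (n : nat) (E : {set 'I_n}) (x : 'cV[R]_n)
  : {set 'I_n} := [set i in E | 0 < x i 0].

Definition tln_code (R : realType) (n : nat) (W : 'M[R]_n) (E : {set 'I_n})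
  : {set 'I_n} -> Prop :=
  fun sigma => exists b x : 'cV[R]_n,
    (forall i, 0 <= b i 0) /\ (forall i, 0 <= x i 0) /\
    tln_fixed_point W b x /\ sigma = supp_plus E x.

Definition intersection_complete (n : nat) (C : {set 'I_n} -> Prop) : Prop :=
  forall sigma nu, C sigma -> C nu -> C (sigma :&: nu).

Definition code_of (R : realType) (n d : nat) (E : {set 'I_n})
    (U : 'I_n -> set 'rV[R]_d) : {set 'I_n} -> Prop :=
  fun sigma => sigma \subset E /\
    exists p : 'rV[R]_d, (forall i, i \in sigma -> U i p) /\
                         (forall j, j \in E -> j \notin sigma -> ~ U j p).

Definition open_convex_code (R : realType) (n : nat) (E : {set 'I_n})
    (C : {set 'I_n} -> Prop) : Prop :=
  exists (d : nat) (U : 'I_n -> set 'rV[R]_d), (1 <= d)%N /\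
    (forall i, i \in E -> open (U i) /\ convex_set (U i)) /\
    (forall sigma, C sigma <-> code_of E U sigma).

(* Main.v *)
Require Import Defs.
From HB Require Import structures.
From mathcomp Require Import all_boot all_order all_algebra.
From mathcomp Require Import all_classical all_reals all_analysis.
From mathcomp Require Import lra.
Set Implicit Arguments. Unset Strict Implicit. Unset Printing Implicit Defensive.
Import Order.TTheory GRing.Theory Num.Theory.
Import numFieldNormedType.Exports.
Local Open Scope classical_set_scope.
Local Open Scope ring_scope.

Section S.
Variables (R : realType) (n : nat) (W : 'M[R]_n) (E : {set 'I_n}).

Definition inK (x : 'cV[R]_n) := (forall i, 0 <= x i 0) /\ (forall i, (W *m x) i 0 <= x i 0).

Lemma addr_gt0E (a b : R) : 0 <= a -> 0 <= b -> (0 < a + b) = (0 < a) || (0 < b).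
Proof.
move=> ha hb; case: (ltrP 0 a) => ha'; case: (ltrP 0 b) => hb' /=.
- by apply/idP; lra.
- by apply/idP; lra.
- by apply/idP; lra.
- by apply/negbTE; rewrite -leNgt; lra.
Qed.

Lemma codeK s : tln_code W E s <-> exists x, inK x /\ s = supp_plus E x.
Proof.
split.
  move=> [b [x [hb [hx [hf ->]]]]]; exists x; split => //; split => // i.
  by rewrite (hf i) le_max lerDl hb orbT.
move=> [x [[hx hw] ->]].
exists (\col_i (x i 0 - (W *m x) i 0)), x; split.
  by move=> i; rewrite mxE subr_ge0.
split => //; split => // i.
by rewrite [X in _ + X]mxE [(W *m x) i 0]mxE addrC subrK; apply/esym/max_idPr.
Qed.

Lemma code0 : tln_code W E finset.set0.
Proof.
apply/codeK; exists 0; split; first by split=> i; rewrite ?mulmx0 mxE.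
by apply/setP=> i; rewrite !inE mxE ltxx andbF.
Qed.

Lemma codeU s t : tln_code W E s -> tln_code W E t -> tln_code W E (s :|: t).
Proof.
move=> /codeK [x [[x0 xw] ->]] /codeK [y [[y0 yw] ->]]; apply/codeK.
exists (x + y); split.
  split; move=> i; first by rewrite mxE addr_ge0 ?x0 ?y0.
  by rewrite mulmxDr [X in X <= _]mxE [X in _ <= X]mxE; apply: lerD.
apply/setP=> i; rewrite !inE mxE -andb_orr; congr (_ && _).
by rewrite addr_gt0E.
Qed.

Lemma codeI : dale W E -> forall s t, tln_code W E s -> tln_code W E t -> tln_code W E (s :&: t).
Proof.
move=> [_ [dE dI]] s t /codeK [x [[x0 xw] ->]] /codeK [y [[y0 yw] ->]]; apply/codeK.
pose z := \col_i (if i \in E then Num.min (x i 0) (y i 0) else Num.max (x i 0) (y i 0)).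
have hz : forall i, (W *m z) i 0 <= (W *m x) i 0 /\ (W *m z) i 0 <= (W *m y) i 0.
  move=> i; rewrite !mxE; split; apply: ler_sum => j _; rewrite mxE;
  case: ifP => jE.
  - by apply: ler_wpM2l; [exact: dE | rewrite ge_min lexx].
  - by apply: ler_wnM2l; [apply: dI; rewrite jE | rewrite le_max lexx].
  - by apply: ler_wpM2l; [exact: dE | rewrite ge_min lexx orbT].
  - by apply: ler_wnM2l; [apply: dI; rewrite jE | rewrite le_max lexx orbT].
exists z; split.
  split; move=> i; first by rewrite mxE; case: ifP => _; rewrite ?le_min ?le_max x0 ?y0.
  have [h1 h2] := hz i; rewrite [z i 0]mxE; case: ifP => _.
    by rewrite le_min (le_trans h1 (xw i)) (le_trans h2 (yw i)).
  by rewrite le_max (le_trans h1 (xw i)).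
apply/setP=> i; rewrite !inE mxE; case: (i \in E) => //=.
by rewrite lt_min.
Qed.

End S.

From Stdlib Require Import Classical.

Lemma exists_min (n : nat) (C : {set 'I_n} -> Prop) :
  (forall s t, C s -> C t -> C (s :&: t)) -> forall i,
  (exists c, C c /\ i \in c) ->
  exists m, C m /\ i \in m /\ forall c, C c -> i \in c -> m \subset c.
Proof.
move=> CI i [c0 [Cc0 ic0]].
suff H : forall k (c : {set 'I_n}), (#|c| <= k)%N -> C c -> i \in c ->
  exists m, C m /\ i \in m /\ forall c, C c -> i \in c -> m \subset c.
  exact: (H _ c0 (leqnn _) Cc0 ic0).
elim=> [|k IH] c hc Cc ic.
  by move: hc; rewrite leqn0 => /eqP/cards0_eq => c0E; rewrite c0E inE in ic.
case: (classic (forall c', C c' -> i \in c' -> c \subset c')) => [h|].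
  by exists c.
move=> /not_all_ex_not [c' H1]; have [Cc' H2] := imply_to_and _ _ H1; have [ic' nsub] := imply_to_and _ _ H2.
apply: (IH (c :&: c')); last by rewrite inE ic ic'.
- have : c :&: c' \proper c.
    rewrite finset.properEneq finset.subsetIl andbT; apply/negP => /eqP e.
    by apply: nsub; rewrite -e finset.subsetIr.
  by move=> /fintype.proper_card h; rewrite -ltnS (leq_trans h hc).
- exact: CI.
Qed.

Lemma coord_open (R : realType) (d : nat) (k : 'I_d) :
  open [set q : 'rV[R]_d | 0 < q ord0 k].
Proof.
apply: (@open_comp _ _ (fun q : 'rV[R]_d => q ord0 k) [set x : R | 0 < x]).
  by move=> q _; apply: coord_continuous.
exact: open_gt.
Qed.

Theorem mainTheorem7 (R : realType) (n : nat) (W : 'M[R]_n) (E : {set 'I_n}) :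
  dale W E -> ground_assumption W ->
  intersection_complete (tln_code W E) /\ open_convex_code R E (tln_code W E).
Proof.
move=> hd _.
set C := tln_code W E.
have CI : forall s t, C s -> C t -> C (s :&: t) by exact: codeI.
split => //.
have hCE : forall c, C c -> c \subset E.
  by move=> c /codeK [x [_ ->]]; apply/fintype.subsetP => i; rewrite inE => /andP[].
have hm : forall i, exists m : {set 'I_n}, (exists c, C c /\ i \in c) ->
    C m /\ i \in m /\ forall c, C c -> i \in c -> m \subset c.
  move=> i; case: (classic (exists c, C c /\ i \in c)) => [h|h].
    have [m hm] := exists_min CI h; by exists m.
  by exists finset.set0.
have [m mP] := boolp.choice hm.
pose U (i : 'I_n) := [set p : 'rV[R]_n.+1 | (exists c, C c /\ i \in c) /\
   forall j, j \in m i -> 0 < p ord0 (lift ord0 j)].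
exists n.+1, U; split => //; split.
  move=> i _; split.
    case: (classic (exists c, C c /\ i \in c)) => Mi; last first.
      rewrite (_ : U i = set0); first exact: open0.
      by apply/seteqP; split => p // [].
    rewrite openE => p [_ hp].
    rewrite /interior.
    have : \forall q \near p, forall j, j \in m i -> 0 < (q : 'rV[R]_n.+1) ord0 (lift ord0 j).
      apply: (@filter_forall _ _ (fun j => [set q : 'rV[R]_n.+1 | j \in m i -> 0 < q ord0 (lift ord0 j)]) (nbhs p) (nbhs_filter p)) => j; rewrite /prop_near1 nbhs_filterE.
      case jm: (j \in m i).
        have ho : open_nbhs p [set q : 'rV[R]_n.+1 | 0 < q ord0 (lift ord0 j)] by split; [exact: coord_open | exact: hp].
        apply: filterS; last exact: (open_nbhs_nbhs ho).
        by move=> q /= qh _.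
      by apply: filterE.
    by apply: filterS => q hq; split.
  move=> x y l; rewrite !inE => -[Mx hx] [_ hy]; split => // j jm.
  have := convR_gt0 l (hx j jm) (hy j jm).
  by rewrite /= !mxE.
move=> s; split.
  move=> Cs; split; first exact: hCE.
  exists (\row_(k < n.+1) (if unlift ord0 k is Some j then (if j \in s then 1 else -1) else 0)).
  have pE : forall j, (\row_(k < n.+1) (if unlift ord0 k is Some j then (if j \in s then 1 else -1) else 0) : 'rV[R]_n.+1) ord0 (lift ord0 j) = if j \in s then 1 else -1.
    by move=> j; rewrite mxE liftK.
  split.
    move=> i iS; have Mi : exists c, C c /\ i \in c by exists s.
    have [_ [_ hmin]] := mP i Mi.
    split => // j jm; rewrite pE.
    by have := fintype.subsetP (hmin s Cs iS) j jm => ->.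
  move=> j _ js [Mj hj]; have [_ [jm _]] := mP j Mj.
  by have := hj j jm; rewrite pE (negbTE js) ltr0N1.
move=> [sE [p [h1 h2]]].
have -> : s = (\bigcup_(i in s) m i)%SET.
  apply/setP => k; apply/idP/idP.
    move=> ks; apply/finset.bigcupP; exists k => //.
    by have [Mk _] := h1 k ks; have [_ [] ] := mP k Mk.
  move=> /finset.bigcupP [i iS km].
  have [Mi hi] := h1 i iS; have [Cmi [_ hmini]] := mP i Mi.
  apply/negPn/negP => ks.
  have kE : k \in E by apply: (fintype.subsetP (hCE _ Cmi)).
  apply: (h2 k kE ks).
  have Mk : exists c, C c /\ k \in c by exists (m i).
  have [_ [_ hmink]] := mP k Mk.
  split => // j jm; apply: hi.
  exact: (fintype.subsetP (hmink _ Cmi km)).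
apply: big_ind.
- exact: code0.
- by move=> a b; apply: codeU.
- by move=> i iS; have [Mi _] := h1 i iS; have [] := mP i Mi.
Qed.
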